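(* Let $r\ge 1$ and let $\Gamma$ be a $(d-1)$-dimensional simplicial complex. (1) If $\mathrm{gr}_1(\Gamma)>2r$, then for any two vertices $u,v$ there are at most $(d-1)^{r-1}$ non-returning walks of length $r$ from $u$ to $v$. (2) If $\mathrm{gr}_1(\Gamma)>2r+1$ and $\{u,v\}$ is an edge, then any non-returning walk of length $r+1$ whose first step is $(u,v)$ and any non-returning walk of length $r+1$ whose first step is $(v,u)$ have different final vertices.
   Context: A simplicial complex $\Gamma$ on a finite vertex set $V=V(\Gamma)$ is a family of subsets of $V$ (faces) closed under taking subsets; its dimension is $\max\{|F|:F\in\Gamma\}-1$. A non-returning walk of length $k$ from $v_0$ to $v_k$ is a sequence of vertices $(v_0,v_1,\dots,v_k)$ (viewed as the sequence of directed edges $\vec{v_0v_1},\dots,\vec{v_{k-1}v_k}$) such that each $\{v_j,v_{j+1}\}$ is an edge of $\Gamma$ and, for all $0\le j\le k-2$, $v_j\neq v_{j+2}$ and $\{v_j,v_{j+1},v_{j+2}\}\notin\Gamma$; its first step is $(v_0,v_1)$. For $W\subseteq V$, $\Gamma[W]=\{F\in\Gamma:F\subseteq W\}$; for a face $F$ (possibly empty), $\mathrm{lk}_\Gamma(F)=\{G\setminus F: F\subseteq G\in\Gamma\}$. Fix a field $\mathbf{k}$; $\tilde H_i(\cdot;\mathbf{k})$ is reduced simplicial homology. The $1$-girth is $\mathrm{gr}_{1}(\Gamma)=\min\{|W|: W\subseteq V(\Gamma),\ \tilde H_{1}(\mathrm{lk}_\Gamma(F)[W];\mathbf{k})\neq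 0 \text{ for some face } F\in\Gamma \text{ (including } F=\emptyset)\}$, or $\infty$ if none exists. *)

(* Defs.v *)
From HB Require Import structures.
From mathcomp Require Import all_boot all_order all_algebra.
Set Implicit Arguments. Unset Strict Implicit. Unset Printing Implicit Defensive.
Import GRing.Theory.

Section Defs.
Variable V : finType.

Definition is_simplicial_complex (G : {set {set V}}) : Prop :=
  forall F H : {set V}, F \in G -> H \subset F -> H \in G.

Definition has_dim_minus1 (G : {set {set V}}) (d : nat) : Prop :=
  (exists2 F, F \in G & #|F| = d) /\ (forall F, F \in G -> #|F| <= d).

Definition induced (G : {set {set V}}) (W : {set V}) : {set {set V}} :=
  [set F in G | F \subset W].

Definition link (G : {set {set V}}) (F : {set V}) : {set {set V}} :=
  [set H :\: F | H in G & F \subset H].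

Section Homology.
Variable K : fieldType.

(* Vertices are totally ordered by enum_rank; oriented simplices are
   listed increasingly. Coefficient of the face T in the boundary of S:
   (-1)^i when S = T u {x} and x is the i-th smallest element of S. *)
Definition bd_coef (S T : {set V}) : K :=
  (if (T \subset S) && (#|S :\: T| == 1)%N then
    (-1) ^+ (\sum_(x in S :\: T) #|[set w in T | enum_rank w < enum_rank x]|)%N
  else 0)%R.

Definition bd (c : {set V} -> K) (T : {set V}) : K :=
  (\sum_(S : {set V}) c S * bd_coef S T)%R.

Definition is_chain (D : {set {set V}}) (i : nat) (c : {set V} -> K) : Prop :=
  forall S, c S != 0%R -> S \in D /\ #|S| = i.+1.

Definition H1_nonzero (D : {set {set V}}) : Prop :=
  exists z : {set V} -> K,
    [/\ is_chain D 1 z, (forall T, bd z T = 0%R) &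
        ~ exists c : {set V} -> K, is_chain D 2 c /\ forall T, bd c T = z T].

(* gr_1(G) > m  (with gr_1 = infinity allowed): every W witnessing
   nonvanishing H~_1 of some induced link has more than m elements. *)
Definition gr1_gt (G : {set {set V}}) (m : nat) : Prop :=
  forall (W F : {set V}), F \in G -> H1_nonzero (induced (link G F) W) ->
    (m < #|W|)%N.
End Homology.

Definition nrwalk (G : {set {set V}}) (k : nat) (w : k.+1.-tuple V) : bool :=
  [forall j : 'I_k,
     (tnth w (inord j) != tnth w (inord j.+1)) &&
     ([set tnth w (inord j); tnth w (inord j.+1)] \in G)] &&
  [forall j : 'I_k, (j.+1 < k)%N ==>
     ((tnth w (inord j) != tnth w (inord j.+2)) &&
      ([set tnth w (inord j); tnth w (inord j.+1); tnth w (inord j.+2)] \notin G))].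

End Defs.

(* Main.v *)
Require Import Defs.
From HB Require Import structures.
From mathcomp Require Import all_boot all_order all_algebra.
From Stdlib Require Import Lia Classical.
Set Implicit Arguments. Unset Strict Implicit. Unset Printing Implicit Defensive.
Import GRing.Theory.

Ltac tolia := intros; repeat match goal with
 | H : is_true (leq _ _) |- _ => apply (elimT leP) in H
 | H : is_true (?a == _) |- _ => let T := type of a in unify T nat; apply (elimT eqP) in H
 | H : is_true (~~ (?a == _)) |- _ => let T := type of a in unify T nat; apply (elimN eqP) in H
 | H : (leq _ _) = false |- _ => apply negbT in H
 | H : is_true (~~ (leq _ _)) |- _ => rewrite -ltnNge in H
 | |- is_true (leq _ _) => apply/leP
 | |- is_true (~~ (leq _ _)) => rewrite -ltnNge
 | |- (leq _ _) = false => apply/negbTE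
 | |- is_true (~~ (?a == _)) => let T := type of a in unify T nat; apply/eqP
 | |- is_true (?a == _) => let T := type of a in unify T nat; apply/eqP
 end; unfold addn, subn, muln, addn_rec, subn_rec, muln_rec in *; lia.

Section Wit.
Variables (K : fieldType) (V : finType).

Lemma card_sep1 (y : V) (P : pred V) : #|[set w in [set y] | P w]| = P y.
Proof.
case: (boolP (P y)) => h.
  have -> : [set w in [set y] | P w] = [set y].
    by apply/setP=> w; rewrite !inE; case: eqP => // ->; rewrite h.
  by rewrite cards1.
have -> : [set w in [set y] | P w] = set0.
  by apply/setP=> w; rewrite !inE; case: eqP => // ->; rewrite (negbTE h).
by rewrite cards0.
Qed.

Lemma set2D1 (x y : V) : x != y -> [set x; y] :\: [set y] = [set x].
Proof.
move=> nxy; apply/setP=> t; rewrite !inE.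
case: (eqVneq t x) => [->|]; first by rewrite nxy.
by case: (eqVneq t y).
Qed.

Lemma sub2_card1 (x y : V) (T : {set V}) : x != y ->
  T \subset [set x; y] -> #|[set x; y] :\: T| == 1%N ->
  T = [set x] \/ T = [set y].
Proof.
move=> nxy sT /cards1P [w Hw].
have wxy : w \in [set x; y] :\: T by rewrite Hw set11.
move: (wxy); rewrite !inE => /andP [wT wxy'].
have key : forall t, t \in [set x; y] -> t \notin T -> t = w.
  by move=> t tin tT; apply/set1P; rewrite -Hw in_setD tT tin.
case/orP: wxy' => /eqP ew; subst w.
- right; apply/setP=> t; rewrite inE; apply/idP/idP.
  + move=> tT; have := subsetP sT _ tT; rewrite !inE => /orP [/eqP et|//].
    by subst t; rewrite tT in wT.
  + move/eqP=> ->; apply/negPn/negP=> yT.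
    have := key y; rewrite !inE eqxx orbT => /(_ isT yT) eyx.
    by rewrite eyx eqxx in nxy.
- left; apply/setP=> t; rewrite inE; apply/idP/idP.
  + move=> tT; have := subsetP sT _ tT; rewrite !inE => /orP [//|/eqP et].
    by subst t; rewrite tT in wT.
  + move/eqP=> ->; apply/negPn/negP=> xT.
    have := key x; rewrite !inE eqxx /= => /(_ isT xT) exy.
    by rewrite exy eqxx in nxy.
Qed.

Section R.
Local Open Scope ring_scope.
Lemma coef2 (x y : V) (T : {set V}) : x != y ->
  bd_coef K [set x; y] T =
  if T == [set y] then (-1) ^+ (enum_rank y < enum_rank x)%N
  else if T == [set x] then (-1) ^+ (enum_rank x < enum_rank y)%N else 0.
Proof.
move=> nxy; rewrite /bd_coef.
case: (eqVneq T [set y]) => [->|nTy].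
  rewrite subsetUr set2D1 // cards1 eqxx /=.
  by rewrite big_set1 card_sep1.
case: (eqVneq T [set x]) => [->|nTx].
  rewrite setUC subsetUr setUC.
  have -> : [set x; y] :\: [set x] = [set y].
    by rewrite setUC set2D1 // eq_sym.
  by rewrite cards1 eqxx /= big_set1 card_sep1.
case: ifP => // /andP [sT c1].
by case: (sub2_card1 nxy sT c1) => E; [rewrite E eqxx in nTx | rewrite E eqxx in nTy].
Qed.

Definition esign (x y : V) : K := if (enum_rank x < enum_rank y)%N then 1 else -1.
Definition echain (x y : V) (S : {set V}) : K := if S == [set x; y] then esign x y else 0.

Lemma bd_echain (x y : V) T : x != y ->
  bd (echain x y) T = (T == [set y])%:R - (T == [set x])%:R.
Proof.
move=> nxy; rewrite /bd (bigD1 [set x; y]) //= big1; last first.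
  by move=> S /negbTE nS; rewrite /echain nS mul0r.
rewrite addr0 /echain eqxx coef2 //.
have rne : (enum_rank x : nat) != enum_rank y.
  by apply: contra nxy => /eqP /val_inj /enum_rank_inj ->.
case: (eqVneq T [set y]) => [->|nTy].
  have -> : ([set y] == [set x]) = false.
    by apply/negbTE; apply: contra nxy => /eqP /setP /(_ y); rewrite !inE eqxx eq_sym.
  rewrite /esign subr0 /=.
  case: (ltngtP (enum_rank x) (enum_rank y)) => h.
  - by rewrite mulr1.
  - by rewrite mulrN1 opprK.
  - by move: rne; rewrite h eqxx.
case: (eqVneq T [set x]) => [_|nTx].
  rewrite /esign sub0r /=.
  case: (ltngtP (enum_rank x) (enum_rank y)) => h.
  - by rewrite expr1 mulrN1.
  - by rewrite expr0 mulr1.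
  - by move: rne; rewrite h eqxx.
by rewrite mulr0 subr0.
Qed.


Lemma bd_add (f g : {set V} -> K) T : bd (fun S => f S + g S) T = bd f T + bd g T.
Proof. by rewrite /bd -big_split; apply: eq_bigr => S _; rewrite mulrDl. Qed.

Lemma bd_sum n (F : 'I_n -> {set V} -> K) T :
  bd (fun S => \sum_(a < n) F a S) T = \sum_(a < n) bd (F a) T.
Proof.
rewrite /bd; under eq_bigr do rewrite mulr_suml.
by rewrite exchange_big.
Qed.

Lemma set2_in (a b c e : V) : [set c; e] = [set a; b] -> c \in [set a; b].
Proof. by move<-; rewrite set21. Qed.

End R.

Lemma witness (D : {set {set V}}) (p : nat -> V) (n : nat) :
  (2 <= n)%N ->
  (forall a b, (a <= n)%N -> (b <= n)%N -> p a = p b -> a = b) ->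
  (forall a, (a < n)%N -> [set p a; p a.+1] \in D) ->
  [set p n; p 0] \in D ->
  (forall S, S \in D -> #|S| != 3%N) ->
  H1_nonzero K D.
Proof.
move=> n2 pinj edges lastE no3.
have dst : forall a, (a < n)%N -> p a != p a.+1.
  move=> a an; apply/eqP=> /pinj E.
  have h1 : (a <= n)%N by tolia.
  have h2 : (a.+1 <= n)%N by tolia.
  have := E h1 h2; tolia.
have dstn : p n != p 0.
  apply/eqP=> /pinj E.
  have := E (leqnn n) (leq0n n); tolia.
set z := fun S => (\sum_(a < n) echain (p a) (p a.+1) S + echain (p n) (p 0) S)%R.
exists z; split.
- move=> S; rewrite /z => nz.
  case: (boolP (S == [set p n; p 0])) => [/eqP ->|nS].
    by split=> //; rewrite cards2 dstn.
  case: (boolP [exists a : 'I_n, S == [set p a; p a.+1]]) => [/existsP [a /eqP ->]|ne].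
    by split; [apply: edges | rewrite cards2 dst].
  move: nz; rewrite {2}/echain (negbTE nS) addr0 big1 ?eqxx //.
  move=> a _; rewrite /echain; case: ifP => // ea.
  by move: ne; rewrite negb_exists => /forallP /(_ a); rewrite ea.
- move=> T; rewrite /z bd_add bd_sum.
  rewrite bd_echain //.
  under eq_bigr => a _ do rewrite bd_echain ?dst //.
  pose f := fun k => ((T == [set p k])%:R : K)%R.
  have -> : (\sum_(i < n) ((T == [set p i.+1])%:R - (T == [set p i])%:R) =
            \sum_(0 <= i < n) (f i.+1 - f i))%R by rewrite big_mkord.
  rewrite telescope_sumr // /f.
  by rewrite addrC subrKA subrr.
- case=> c [cc bdc].
  have c0 : forall S, c S = 0%R.
    move=> S; apply/eqP/negPn/negP => /cc [SD S3].
    by move: (no3 _ SD); rewrite S3.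
  have z0 : forall T, z T = 0%R.
    by move=> T; rewrite -bdc /bd big1 // => S _; rewrite c0 mul0r.
  move: (z0 [set p 0; p 1]); rewrite /z.
  case: n n2 pinj edges lastE dst dstn {z z0 bdc} => [|n'] // n2 pinj edges lastE dst dstn.
  rewrite big_ord_recl /= big1; last first.
    move=> i _; rewrite /echain /bump add1n; case: ifP => // /eqP /esym E.
    have hi : (i.+1 <= n'.+1)%N by have := ltn_ord i; tolia.
    have hi2 : (i.+2 <= n'.+1)%N by have := ltn_ord i; tolia.
    have := set2_in E; rewrite !inE => /orP [/eqP|/eqP] E'.
    - by have := pinj _ _ hi (leq0n _) E'.
    - have i0 : (i : nat) = 0%N.
        have := pinj _ _ hi (isT : (1 <= n'.+1)%N) E'; tolia.
      move: E; rewrite i0 => E.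
      have : p 2 \in [set p 0%N; p 1%N] by rewrite -E set22.
      rewrite !inE => /orP [/eqP|/eqP] E2.
      + by have := pinj _ _ n2 (isT : (0 <= n'.+1)%N) E2.
      + by have := pinj _ _ n2 (isT : (1 <= n'.+1)%N) E2.
  rewrite addr0 {2}/echain.
  have -> : ([set p 0%N; p 1%N] == [set p n'.+1; p 0%N]) = false.
    apply/negbTE/negP=> /eqP /esym E.
    have := set2_in E; rewrite !inE => /orP [/eqP|/eqP] E'.
    - by have := pinj _ _ (leqnn _) (isT : (0 <= n'.+1)%N) E'.
    - have := pinj _ _ (leqnn _) (isT : (1 <= n'.+1)%N) E'; tolia.
  rewrite addr0 /echain eqxx /esign; case: ifP => _ /eqP.
  + by rewrite oner_eq0.
  + by rewrite oppr_eq0 oner_eq0.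
Qed.

End Wit.


Section Cx.
Variables (K : fieldType) (V : finType) (G : {set {set V}}) (m : nat).
Hypotheses (SC : is_simplicial_complex G) (gr : gr1_gt K G m).

Lemma in_link (F H : {set V}) : H \in G -> F \subset H -> H :\: F \in link G F.
Proof. by move=> HG FH; apply/imsetP; exists H => //; rewrite inE HG FH. Qed.

Lemma in3 (a b c x : V) : x \in [set a; b; c] -> [\/ x = a, x = b | x = c].
Proof. by rewrite !inE => /orP [/orP [] /eqP|/eqP] ->; [apply: Or31|apply: Or32|apply: Or33]. Qed.

Lemma set31 (a b c : V) : a \in [set a; b; c]. Proof. by rewrite !inE eqxx. Qed.
Lemma set32 (a b c : V) : b \in [set a; b; c]. Proof. by rewrite !inE eqxx ?orbT. Qed.
Lemma set33 (a b c : V) : c \in [set a; b; c]. Proof. by rewrite !inE eqxx ?orbT. Qed.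

Lemma card3_le (a b c : V) : #|[set a; b; c]| <= 3.
Proof.
rewrite -setUA cardsU1 cards2.
by case: (a \notin _); case: (b != c).
Qed.

Lemma flag (m3 : 3 <= m) : forall S : {set V}, 2 <= #|S| ->
  (forall x y, x \in S -> y \in S -> x != y -> [set x; y] \in G) -> S \in G.
Proof.
suff H : forall n (S : {set V}), #|S| = n -> 2 <= n ->
  (forall x y, x \in S -> y \in S -> x != y -> [set x; y] \in G) -> S \in G.
  by move=> S; apply: H.
elim=> [|n IH] S cS // n2 adjS.
case: (eqVneq n 1) => [n1|n1].
  subst n; have /cards2P [x [y [nxy eS]]] : #|S| == 2 by rewrite cS.
  subst S; by apply: adjS; rewrite ?set21 ?set22.
have n3 : 2 <= n by move: n2 n1; tolia.
have [a aS] : exists a, a \in S by apply/card_gt0P; rewrite cS.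
have cSa : #|S :\ a| = n by move: cS; rewrite (cardsD1 a) aS add1n => -[].
have [b bS'] : exists b, b \in S :\ a by apply/card_gt0P; rewrite cSa; move: n3; tolia.
have cSab : #|S :\ a :\ b| = n.-1 by rewrite (cardsD1 b) bS' add1n in cSa; rewrite -cSa.
have [c cS''] : exists c, c \in S :\ a :\ b by apply/card_gt0P; rewrite cSab; move: n3; tolia.
move: (bS') (cS''); rewrite !inE => /andP [ba bS] /andP [cb /andP [ca cS0]].
have sub1 : forall x, x \in S -> S :\ x \in G.
  move=> x xS; apply: (IH); first by rewrite (cardsD1 x) xS add1n in cS; case: cS.
    by [].
  by move=> y z; rewrite !inE => /andP [_ yS] /andP [_ zS]; apply: adjS.
case: (boolP (S \in G)) => // nS; exfalso.
set F := S :\: [set a; b; c].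
have FG : F \in G.
  apply: (SC (sub1 a aS)); apply/subsetP=> t; rewrite !inE.
  by case/andP=> tn ->; rewrite andbT; apply: contra tn => /eqP ->; rewrite eqxx.
have e1 : (a == b) = false by rewrite eq_sym; apply/negbTE.
have e2 : (b == a) = false by apply/negbTE.
have e3 : (a == c) = false by rewrite eq_sym; apply/negbTE.
have e4 : (c == a) = false by apply/negbTE.
have e5 : (b == c) = false by rewrite eq_sym; apply/negbTE.
have e6 : (c == b) = false by apply/negbTE.
have lk : forall x y z, x \in S -> y \in S -> z \in S ->
  x \in [set a; b; c] -> y \in [set a; b; c] -> z \in [set a; b; c] ->
  x != y -> y != z -> x != z ->
  [set y; z] \in induced (link G F) [set a; b; c].
  move=> x y z xS yS zS xW yW zW xy yz xz.
  have -> : [set y; z] = (S :\ x) :\: F.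
    apply/setP=> t; rewrite !inE.
    move: xW yW zW => /in3 [] ex /in3 [] ey /in3 [] ez;
    subst x y z; rewrite ?eqxx // in xy yz xz *;
    (case: (eqVneq t a) => [->|ta]; [|case: (eqVneq t b) => [->|tb]; [|case: (eqVneq t c) => [->|tc]]]);
    rewrite ?eqxx ?aS ?bS ?cS0 ?e1 ?e2 ?e3 ?e4 ?e5 ?e6 ?(negbTE ta) ?(negbTE tb) ?(negbTE tc) ?andbF ?andNb //=.
  rewrite inE; apply/andP; split.
    apply: in_link; first exact: sub1.
    apply/subsetP=> t; rewrite !inE => /andP [tn ->]; rewrite andbT.
    by apply: contra tn => /eqP ->; move: xW; rewrite !inE.
  apply/subsetP=> t; rewrite /F in_setD in_setD1 in_setD => /andP [tF /andP [_ tS]].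
  by move: tF; rewrite tS andbT negbK.
have abcW : forall x, x \in [:: a; b; c] -> x \in S /\ x \in [set a; b; c].
  by move=> x; rewrite !inE => /or3P [] /eqP ->; rewrite ?aS ?bS ?cS0 !eqxx ?orbT.
have ab : a != b by rewrite eq_sym.
have ac : a != c by rewrite eq_sym.
have lkab := lk c a b cS0 aS bS (set33 _ _ _) (set31 _ _ _) (set32 _ _ _) ca ab cb.
have lkbc := lk a b c aS bS cS0 (set31 _ _ _) (set32 _ _ _) (set33 _ _ _) ab (negbT e5) ac.
have lkca := lk b c a bS cS0 aS (set32 _ _ _) (set33 _ _ _) (set31 _ _ _) (negbT e5) ca ba.
suff : m < #|[set a; b; c]|.
  by move=> /leq_trans /(_ (card3_le a b c)) h; move: m3 h; tolia.
apply: (@gr [set a; b; c] F FG); apply: (@witness K V _ (fun i => nth a [:: a; b; c] i) 2).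
- by [].
- move=> i j hi hj; case: i hi => [|[|[|i]]] // _; case: j hj => [|[|[|j]]] // _ /= /eqP;
  by rewrite ?e1 ?e2 ?e3 ?e4 ?e5 ?e6.
- by move=> i; case: i => [|[|i]] //= _.
- exact: lkca.
- move=> T; rewrite inE => /andP [/imsetP [H]]; rewrite inE => /andP [HG FH] -> TW.
  apply/negP=> /eqP c3; apply: (negP nS); apply: (SC HG).
  have eT : H :\: F = [set a; b; c].
    by apply/eqP; rewrite eqEcard TW c3 card3_le.
  apply/subsetP=> t tS; case: (boolP (t \in F)) => tF; first exact: (subsetP FH).
  have : t \in H :\: F.
    rewrite eT; move: tF; rewrite /F in_setD tS andbT negbK => //.
  by rewrite inE => /andP [].
Qed.


Lemma link0 (X : {set V}) : X \in G -> X \in link G set0.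
Proof. by move=> XG; rewrite -(setD0 X); apply: in_link => //; apply: sub0set. Qed.

Lemma link0_in (X : {set V}) : X \in link G set0 -> X \in G.
Proof. by move=> /imsetP [H]; rewrite inE setD0 => /andP [HG _] ->. Qed.

Lemma no_cycle (F0 : set0 \in G) (p : nat -> V) (n : nat) : 3 <= n -> n.+1 <= m ->
  (forall a b, a <= n -> b <= n -> p a = p b -> a = b) ->
  (forall a, a < n -> [set p a; p a.+1] \in G) -> [set p n; p 0] \in G ->
  (forall a b, a <= n -> b <= n -> a <> b -> [set p a; p b] \in G ->
     (b = a.+1 \/ a = b.+1 \/ (a = 0 /\ b = n) \/ (a = n /\ b = 0))) -> False.
Proof.
move=> n3 nm pinj edges lastE chords.
set W := [set p (val i) | i in 'I_n.+1].
have pW : forall i, i <= n -> p i \in W.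
  by move=> i hi; apply/imsetP; exists (Ordinal (hi : i < n.+1)).
have cW : #|W| <= n.+1 by rewrite -[X in _ <= X](card_ord n.+1); apply: leq_imset_card.
suff : m < #|W| by move=> h; move: h cW nm; tolia.
have inD : forall i j, i <= n -> j <= n -> [set p i; p j] \in G ->
    [set p i; p j] \in induced (link G set0) W.
  move=> i j hi hj e; rewrite inE link0 //=; apply/subsetP=> t; rewrite !inE.
  by case/orP=> /eqP ->; apply: pW.
apply: (@gr W set0 F0); apply: (@witness K V _ p n).
- by move: n3; tolia.
- exact: pinj.
- by move=> a ha; apply: inD; [move: ha; tolia|move: ha; tolia|exact: edges].
- by apply: inD.
- move=> T; rewrite inE => /andP [/link0_in TG TW]; apply/negP=> /eqP c3.
  have [x xT] : exists x, x \in T by apply/card_gt0P; rewrite c3.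
  have /cards2P [y [z [yz eT]]] : #|T :\ x| == 2.
    by move: c3; rewrite (cardsD1 x) xT add1n => -[->].
  have yT : y \in T :\ x by rewrite eT set21.
  have zT : z \in T :\ x by rewrite eT set22.
  move: yT zT; rewrite !inE => /andP [yx yT] /andP [zx zT].
  have idx : forall t, t \in T -> exists2 i, i <= n & t = p i.
    move=> t /(subsetP TW) /imsetP [i _ ->]; exists (val i) => //.
    by rewrite -ltnS ltn_ord.
  have pairG : forall i j, p i \in T -> p j \in T -> [set p i; p j] \in G.
    move=> i j hi hj; apply: (SC TG); apply/subsetP=> t; rewrite !inE.
    by case/orP=> /eqP ->.
  have [i hi ex] := idx _ xT.
  have [j hj ey] := idx _ yT.
  have [k hk ez] := idx _ zT.
  subst x y z.
  have nij : i <> j by move=> E; subst; rewrite eqxx in yx.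
  have njk : j <> k by move=> E; subst; rewrite eqxx in yz.
  have nik : i <> k by move=> E; subst; rewrite eqxx in zx.
  have c1 := chords _ _ hi hj nij (pairG _ _ xT yT).
  have c2 := chords _ _ hj hk njk (pairG _ _ yT zT).
  have c3' := chords _ _ hi hk nik (pairG _ _ xT zT).
  move: hi hj hk n3; tolia.
Qed.

Lemma step1 (c : nat -> V) (L : nat) : forall s i j, j - i <= s -> i < j -> j <= L -> c i = c j ->
  exists i' j', [/\ i' < j', j' <= L, c i' = c j' &
    forall x y, i' <= x -> x < y -> y < j' -> c x <> c y].
Proof.
elim=> [|s IH] i j hs ij jL e; first by move: hs ij; tolia.
case: (classic (exists x y, [/\ i <= x, x < y, y < j & c x = c y])).
  move=> [x [y [ix xy yj exy]]].
  apply: (IH x y) => //; move: hs ix xy yj jL; tolia.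
move=> nex; exists i, j; split=> // x y ix xy yj exy; apply: nex; exists x, y; by split.
Qed.

Lemma step2 (c : nat -> V) (i q : nat) : forall s a b, b - a <= s -> i <= a -> a.+2 <= b -> b <= q ->
  [set c a; c b] \in G ->
  exists a' b', [/\ i <= a', a'.+2 <= b', b' <= q, [set c a'; c b'] \in G &
    forall x y, a' <= x -> x.+2 <= y -> y <= b' -> (x <> a' \/ y <> b') -> [set c x; c y] \notin G].
Proof.
elim=> [|s IH] a b hs ia ab bq e; first by move: hs ab; tolia.
case: (classic (exists x y, [/\ a <= x, x.+2 <= y, y <= b, (x <> a \/ y <> b) & [set c x; c y] \in G])).
  move=> [x [y [ax xy yb ne exy]]].
  apply: (IH x y) => //; move: hs ax xy yb bq ne ia; tolia.
move=> nex; exists a, b; split=> // x y ax xy yb ne; apply/negP=> exy; apply: nex.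
by exists x, y; split.
Qed.

Lemma closed_walk (F0 : set0 \in G) (c : nat -> V) (L : nat) : L <= m -> 0 < L -> c 0 = c L ->
  (forall k, k < L -> c k != c k.+1 /\ [set c k; c k.+1] \in G) ->
  (forall k, k.+2 <= L -> c k != c k.+2 /\ [set c k; c k.+2] \notin G) -> False.
Proof.
move=> Lm L0 cL edg nr.
have [i [j [ij jL cij inj]]] := @step1 c L L 0 L (ltac:(by rewrite subn0)) L0 (leqnn L) cL.
have h3 : i.+3 <= j.
  case: (leqP i.+3 j) => // h.
  have : j = i.+1 \/ j = i.+2 by move: h ij; tolia.
  case=> E; subst j.
  - by have [/eqP] := edg i jL.
  - by have [/eqP] := nr i jL.
have jq : j = j.-1.+1 by move: h3; tolia.
have chord0 : [set c i; c j.-1] \in G.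
  have [_] := edg j.-1 (ltac:(move: jL h3; tolia)).
  by rewrite -jq -cij setUC.
have [a' [b' [ia ab bq ea' inner]]] :=
  @step2 c i j.-1 j i j.-1 (ltac:(tolia)) (leqnn i) (ltac:(move: h3; tolia)) (leqnn _) chord0.
apply: (@no_cycle F0 (fun t => c (a' + t)) (b' - a')).
- case: (leqP 3 (b' - a')) => // h.
  have E : b' = a'.+2 by move: h ab; tolia.
  by have [_] := nr a' (ltac:(move: E bq jL h3; tolia)); rewrite -E ea'.
- by move: Lm bq jL h3 ia ab; tolia.
- move=> x y hx hy /= exy.
  case: (ltngtP x y) => // h.
  + by exfalso; apply: (inj (a' + x) (a' + y)) => //; move: hx hy h ia ab bq h3; tolia.
  + by exfalso; apply: (inj (a' + y) (a' + x)) => //; move: hx hy h ia ab bq h3; tolia.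
- move=> t ht /=; rewrite addnS; apply: (proj2 (edg (a' + t) _)).
  by move: ht ab bq h3 jL; tolia.
- have -> : a' + (b' - a') = b' by move: ab; tolia.
  by rewrite addn0 setUC.
- have key : forall x y, x < y -> y <= b' - a' -> [set c (a' + x); c (a' + y)] \in G ->
      y = x.+1 \/ (x = 0 /\ y = b' - a').
    move=> x y xy yn e.
    case: (eqVneq y x.+1) => [->|ny]; first by left.
    right.
    case: (classic (a' + x <> a' \/ a' + y <> b')) => ne.
      by have := inner (a' + x) (a' + y) (leq_addr _ _) (ltac:(move: xy ny; tolia))
        (ltac:(move: yn ab; tolia)) ne; rewrite e.
    by move: ne ab => /not_or_and [/NNPP e1 /NNPP e2]; tolia.
  move=> x y hx hy nxy /= e.
  case: (ltngtP x y) => h.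
  + by have := key x y h hy e; tolia.
  + by rewrite setUC in e; have := key y x h hx e; tolia.
  + by [].
Qed.


End Cx.


Section Walks.
Variables (V : finType) (G : {set {set V}}).

Definition Wk (f : nat -> V) (k : nat) : Prop :=
  (forall j, j < k -> f j != f j.+1 /\ [set f j; f j.+1] \in G) /\
  (forall j, j.+2 <= k -> f j != f j.+2 /\ [set f j; f j.+1; f j.+2] \notin G).

Lemma set3_rev (a b c : V) : [set c; b; a] = [set a; b; c].
Proof. by apply/setP=> t; rewrite !inE; do 3 case: (t == _). Qed.

Lemma Wk_ext f g k : (forall n, n <= k -> f n = g n) -> Wk f k -> Wk g k.
Proof.
move=> e [h1 h2]; split.
- move=> j hj; rewrite -!e //; [exact: h1 | exact: ltnW].
- move=> j hj; rewrite -!e //; first exact: h2.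
  all: by move: hj; tolia.
Qed.

Lemma Wk_rev f k : Wk f k -> Wk (fun n => f (k - n)) k.
Proof.
move=> [h1 h2]; split.
- move=> j hj.
  have -> : k - j = (k - j.+1).+1 by move: hj; tolia.
  have [a b] := h1 (k - j.+1) (ltac:(move: hj; tolia)).
  by rewrite eq_sym setUC.
- move=> j hj.
  have -> : k - j = (k - j.+2).+2 by move: hj; tolia.
  have -> : k - j.+1 = (k - j.+2).+1 by move: hj; tolia.
  have [a b] := h2 (k - j.+2) (ltac:(move: hj; tolia)).
  by rewrite eq_sym set3_rev.
Qed.

Lemma Wk_shift f k a k' : a + k' <= k -> Wk f k -> Wk (fun n => f (a + n)) k'.
Proof.
move=> hk [h1 h2]; split.
- move=> j hj; rewrite addnS; apply: h1; move: hj hk; tolia.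
- move=> j hj; rewrite !addnS; apply: h2; move: hj hk; tolia.
Qed.

Lemma Wk_le f k k' : k' <= k -> Wk f k -> Wk f k'.
Proof.
move=> hk W; have := Wk_shift (a := 0) (k' := k') hk W.
by apply: Wk_ext.
Qed.

Lemma Wk_glue f g k1 k2 : Wk f k1 -> Wk g k2 -> f k1 = g 0 ->
  (0 < k1 -> 0 < k2 -> f k1.-1 != g 1 /\ [set f k1.-1; f k1; g 1] \notin G) ->
  Wk (fun n => if n <= k1 then f n else g (n - k1)) (k1 + k2).
Proof.
move=> [f1 f2] [g1 g2] e junc.
set h := fun n => _.
have hf : forall n, n <= k1 -> h n = f n by move=> n hn; rewrite /h hn.
have hg : forall n, k1 <= n -> h n = g (n - k1).
  move=> n hn; rewrite /h; case: ifP => hn' //.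
  have E : n = k1 by move: hn hn'; tolia.
  by rewrite E subnn.
split.
- move=> j hj; case: (leqP j.+1 k1) => hjk.
  + rewrite !hf //; [exact: f1 | exact: ltnW].
  + rewrite !hg; [| move: hjk; tolia | move: hjk; tolia].
    have -> : j.+1 - k1 = (j - k1).+1 by move: hjk; tolia.
    apply: g1; move: hjk hj; tolia.
- move=> j hj; case: (leqP j.+2 k1) => hjk.
  + rewrite !hf; [exact: f2 | move: hjk; tolia | move: hjk; tolia | move: hjk; tolia].
  case: (leqP k1 j) => hkj.
  + rewrite !hg; [| move: hkj; tolia | move: hkj; tolia | move: hkj; tolia].
    have -> : j.+1 - k1 = (j - k1).+1 by move: hkj; tolia.
    have -> : j.+2 - k1 = (j - k1).+2 by move: hkj; tolia.
    apply: g2; move: hkj hj; tolia.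
  + have ej : j = k1.-1 by move: hjk hkj; tolia.
    rewrite (hf j); last by move: hkj; tolia.
    rewrite (hf j.+1); last by move: hkj; tolia.
    rewrite (hg j.+2); last by move: hkj hjk; tolia.
    have -> : j.+2 - k1 = 1 by move: hkj hjk; tolia.
    have -> : j.+1 = k1 by move: hkj hjk; tolia.
    rewrite ej; apply: junc; move: hkj hjk hj; tolia.
Qed.

End Walks.

Section Conv.
Variables (V : finType) (G : {set {set V}}).

Lemma tnth_inord k (w : k.+1.-tuple V) x0 j : j <= k -> tnth w (inord j) = nth x0 w j.
Proof. by move=> hj; rewrite (tnth_nth x0) inordK // ltnS. Qed.

Lemma nrwalk_Wk k (w : k.+1.-tuple V) x0 : nrwalk G w -> Wk G (nth x0 w) k.
Proof.
case/andP => /forallP h1 /forallP h2; split.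
- move=> j hj; have := h1 (Ordinal hj); rewrite /= !(tnth_inord _ x0) //; last exact: ltnW.
  by case/andP=> -> ->.
- move=> j hj; have hj' : j < k by move: hj; tolia.
  have := h2 (Ordinal hj'); rewrite /= hj /= !(tnth_inord _ x0) //.
  + by case/andP=> -> ->.
  all: by move: hj; tolia.
Qed.

Lemma Wk_nrwalk k (w : k.+1.-tuple V) x0 : Wk G (nth x0 w) k -> nrwalk G w.
Proof.
case=> h1 h2; apply/andP; split; apply/forallP => j.
- rewrite !(tnth_inord _ x0); try exact: (ltn_ord j); try exact: (ltnW (ltn_ord j)).
  by have [-> ->] := h1 j (ltn_ord j).
- apply/implyP => hj; rewrite !(tnth_inord _ x0); try by move: hj; tolia.
  by have [-> ->] := h2 j hj.
Qed.

End Conv.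


Section Main.
Variables (K : fieldType) (V : finType) (G : {set {set V}}) (m : nat).
Hypotheses (SC : is_simplicial_complex G) (gr : gr1_gt K G m) (m3 : 3 <= m).

Lemma tri (a b c : V) : a != b -> b != c -> a != c -> [set a; b] \in G -> [set b; c] \in G ->
  [set a; b; c] \notin G -> [set a; c] \notin G.
Proof.
move=> ab bc ac eab ebc nt; apply/negP => eac; apply: (negP nt).
apply: (flag SC gr m3).
  apply: (@leq_trans #|[set a; b]|); first by rewrite cards2 ab.
  by apply: subset_leq_card; apply/subsetP=> t; rewrite !inE => ->.
have ba : b != a by rewrite eq_sym.
have cb : c != b by rewrite eq_sym.
have ca : c != a by rewrite eq_sym.
move=> x y /in3 [] -> /in3 [] -> //; rewrite ?eqxx // => _; rewrite 1?setUC //.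
Qed.

Lemma Wk_graph f k : Wk G f k -> forall j, j.+2 <= k -> f j != f j.+2 /\ [set f j; f j.+2] \notin G.
Proof.
move=> [h1 h2] j hj; have [n1 n2] := h2 j hj; split => //.
have [a1 a2] := h1 j (ltac:(move: hj; tolia)).
have [b1 b2] := h1 j.+1 (ltac:(move: hj; tolia)).
exact: (tri a1 b1 n1 a2 b2 n2).
Qed.

Lemma closedWk (F0 : set0 \in G) c L : L <= m -> 0 < L -> c 0 = c L -> Wk G c L -> False.
Proof.
move=> Lm L0 cL W; apply: (closed_walk SC gr F0 Lm L0 cL).
- by case: W.
- exact: Wk_graph.
Qed.


Lemma part2 (F0 : set0 \in G) r : 1 <= r -> r.+1 + r <= m ->
     forall u v : V, u != v -> [set u; v] \in G ->
       forall w1 w2 : (r.+2).-tuple V,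
         nrwalk G w1 -> nrwalk G w2 ->
         tnth w1 ord0 = u -> tnth w1 (inord 1) = v ->
         tnth w2 ord0 = v -> tnth w2 (inord 1) = u ->
         tnth w1 ord_max != tnth w2 ord_max.
Proof.
move=> r1 rm u v uv uvG w1 w2 H1 H2 e10 e11 e20 e21.
apply/negP => /eqP elast.
have W1 := nrwalk_Wk u H1.
have W2 := nrwalk_Wk u H2.
rewrite (tnth_nth u) /= in e10; rewrite (tnth_nth u) /= in e20.
rewrite (tnth_inord _ u) // in e11; rewrite (tnth_inord _ u) // in e21.
rewrite !(tnth_nth u) /= in elast.
have Wf := Wk_rev W1.
have Wg := Wk_shift (a := 1) (k' := r) (leqnn _) W2.
have Wh := Wk_glue Wf Wg (ltac:(by rewrite /= subnn addn0 e10 e21)) _.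
apply: (closedWk F0 (L := r.+1 + r) _ _ _ (Wh _)).
- exact: rm.
- by move: r1; tolia.
- rewrite /= subn0.
  have -> : (r.+1 + r <= r.+1) = false by apply/negbTE; move: r1; tolia.
  have -> : r.+1 + r - r.+1 = r by tolia.
  by rewrite elast add1n.
- move=> _ _; have -> : r.+1.-1 = r by [].
  have -> : r.+1 - r = 1 by move: r1; tolia.
  rewrite e11 subnn e10 add1n.
  have [a b] := (proj2 W2) 0 (ltac:(by [])).
  by move: a b; rewrite e20 e21.
Qed.

End Main.


Section Count.
Variables (V : finType) (G : {set {set V}}).

Definition Aset r (u v : V) := [set w : (r.+1).-tuple V |
            [&& nrwalk G w, tnth w ord0 == u & tnth w ord_max == v]].

Lemma Aset_P r u v (w : (r.+1).-tuple V) : w \in Aset r u v ->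
  [/\ Wk G (nth u w) r, nth u w 0 = u & nth u w r = v].
Proof.
rewrite inE => /and3P [nw /eqP e0 /eqP e1]; split.
- exact: nrwalk_Wk.
- by rewrite (tnth_nth u) in e0.
- by rewrite (tnth_nth u) in e1.
Qed.

Lemma count1 u v : #|Aset 1 u v| <= 1.
Proof.
apply/card_le1_eqP => w1 w2 /Aset_P [_ a1 b1] /Aset_P [_ a2 b2].
apply: eq_from_tnth => i; rewrite !(tnth_nth u).
case: i => [[|[|//]] hi] /=; [by rewrite a1 a2 | by rewrite b1 b2].
Qed.

End Count.

Section Step.
Variables (K : fieldType) (V : finType) (G : {set {set V}}) (m d : nat).
Hypotheses (SC : is_simplicial_complex G) (gr : gr1_gt K G m) (m3 : 3 <= m)
  (F0 : set0 \in G) (dimb : forall F, F \in G -> #|F| <= d).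

Definition pre s (w : (s.+2).-tuple V) : (s.+1).-tuple V :=
  [tuple tnth w (widen_ord (leqnSn s.+1) i) | i < s.+1].

Lemma nth_pre s (w : (s.+2).-tuple V) x0 n : n <= s -> nth x0 (pre w) n = nth x0 w n.
Proof.
move=> hn; have hn' : n < s.+1 by [].
have := nth_mktuple (fun i : 'I_s.+1 => tnth w (widen_ord (leqnSn s.+1) i)) x0 (Ordinal hn').
by rewrite /= (tnth_nth x0) /=.
Qed.

Lemma clique s u v (w1 w2 : (s.+2).-tuple V) : s.+1 + s.+1 <= m ->
  w1 \in Aset G s.+1 u v -> w2 \in Aset G s.+1 u v ->
  nth u w1 s != nth u w2 s -> [set nth u w1 s; nth u w2 s] \in G.
Proof.
move=> sm /Aset_P [W1 a1 b1] /Aset_P [W2 a2 b2] nxy.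
apply/negPn/negP => nadj.
have Wg := Wk_rev W2.
have Wh := Wk_glue W1 Wg (ltac:(by rewrite /= subn0 b1 b2)) _.
apply: (closedWk SC gr m3 F0 (L := s.+1 + s.+1) _ _ _ (Wh _)).
- exact: sm.
- by [].
- rewrite /=.
  have -> : (s.+1 + s.+1 <= s.+1) = false by tolia.
  have -> : s.+1 + s.+1 - s.+1 = s.+1 by tolia.
  by rewrite subnn a1 a2.
- move=> _ _ /=.
  have -> : s.+1 - 1 = s by tolia.
  split => //; rewrite b1.
  apply: contra nadj => /(SC) -> //.
  by apply/subsetP=> t; rewrite !inE => /orP [] ->; rewrite ?orbT.
Qed.

Lemma stepc s u v : 1 <= s -> s.+1 + s.+1 <= m ->
  (forall x, #|Aset G s u x| <= (d - 1) ^ (s - 1)) ->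
  #|Aset G s.+1 u v| <= (d - 1) ^ s.
Proof.
move=> s1 sm IH.
set A := Aset G s.+1 u v.
pose pen := fun w : (s.+2).-tuple V => nth u w s.
set X := [set pen w | w in A].
have cardA : #|A| = \sum_(x in X) #|[pred w in A | pen w == x]|.
  rewrite -sum1_card (partition_big pen (mem X)) /=; last by move=> w wA; apply: imset_f.
  by apply: eq_bigr => x _; rewrite -sum1_card.
have cx : forall x, #|[pred w in A | pen w == x]| <= (d - 1) ^ (s - 1).
  move=> x; apply: leq_trans (IH x).
  rewrite -(@card_in_imset _ _ (@pre s)).
  - apply: subset_leq_card; apply/subsetP => t /imsetP [w]; rewrite inE => /andP [wA /eqP pw] ->.
    have [W a0 b0] := Aset_P wA.
    rewrite inE; apply/and3P; split.
    + apply: (@Wk_nrwalk _ _ _ _ u); apply: Wk_ext (Wk_le (leqnSn s) W).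
      by move=> n hn; rewrite nth_pre.
    + by rewrite (tnth_nth u) nth_pre // a0.
    + by rewrite (tnth_nth u) /= nth_pre // -pw.
  - move=> w1 w2; rewrite !inE => /andP [w1A _] /andP [w2A _] E.
    have {}w1A : w1 \in A by rewrite inE.
    have {}w2A : w2 \in A by rewrite inE.
    have [_ _ b1] := Aset_P w1A; have [_ _ b2] := Aset_P w2A.
    apply: eq_from_tnth => i; rewrite !(tnth_nth u).
    case: (ltnP i s.+1) => hi.
    + by rewrite -!(@nth_pre s _ u i hi) E.
    + have -> : (i : nat) = s.+1 by have := ltn_ord i; move: hi; tolia.
      by rewrite b1 b2.
have vX : v \notin X.
  apply/negP => /imsetP [w wA ev].
  have [[W _] _ b0] := Aset_P wA.
  have [ne _] := W s (leqnn _).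
  by move: ne; rewrite b0 ev eqxx.
have eX : forall x, x \in X -> [set x; v] \in G.
  move=> x /imsetP [w wA ->]; have [[W _] _ b0] := Aset_P wA.
  have [_ e] := W s (leqnn _); by rewrite -b0.
have cX : #|X| <= d - 1.
  case: (eqVneq X set0) => [->|Xn0]; first by rewrite cards0.
  have SG : v |: X \in G.
    apply: (flag SC gr m3).
      rewrite cardsU1 vX add1n ltnS card_gt0; exact: Xn0.
    move=> x y /setU1P [->|xX] /setU1P [->|yX] nxy; rewrite ?eqxx // in nxy.
    - by rewrite setUC; apply: eX.
    - exact: eX.
    - move: xX yX nxy => /imsetP [w1 w1A ->] /imsetP [w2 w2A ->] nxy.
      rewrite /pen in nxy *; exact: (clique sm w1A w2A nxy).
  have := dimb SG; rewrite cardsU1 vX add1n => h; move: h; tolia.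
rewrite cardA.
have hs : \sum_(x in X) #|[pred w in A | pen w == x]| <= \sum_(x in X) (d - 1) ^ (s - 1).
  by apply: leq_sum => x _; exact: cx.
apply: leq_trans hs _.
rewrite sum_nat_const.
have -> : (d - 1) ^ s = (d - 1) * (d - 1) ^ (s - 1).
  by rewrite -expnS; congr (_ ^ _); move: s1; tolia.
by rewrite leq_mul.
Qed.

End Step.

Unset Implicit Arguments. Set Strict Implicit.

Theorem mainTheorem7 (K : fieldType) (V : finType) (G : {set {set V}})
  (d r : nat) :
  (1 <= r)%N -> is_simplicial_complex G -> has_dim_minus1 G d ->
  (gr1_gt K G (2 * r) ->
     forall u v : V,
       (#|[set w : (r.+1).-tuple V |
            [&& nrwalk G w, tnth w ord0 == u & tnth w ord_max == v]]|
        <= (d - 1) ^ (r - 1))%N)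
  /\
  (gr1_gt K G (2 * r + 1) ->
     forall u v : V, u != v -> [set u; v] \in G ->
       forall w1 w2 : (r.+2).-tuple V,
         nrwalk G w1 -> nrwalk G w2 ->
         tnth w1 ord0 = u -> tnth w1 (inord 1) = v ->
         tnth w2 ord0 = v -> tnth w2 (inord 1) = u ->
         tnth w1 ord_max != tnth w2 ord_max).
Proof.
move=> r1 SC [[F FG Fd] dimb].
have F0 : set0 \in G by apply: (SC _ _ FG); apply: sub0set.
split.
- move=> gr u v.
  change (#|Aset G r u v| <= (d - 1) ^ (r - 1)).
  case: r r1 gr => [//|r] _ gr.
  case: (eqVneq r 0) => [->|r0]; first exact: count1.
  have m3 : 3 <= 2 * r.+1 by move: r0; tolia.
  suff H : forall s, 1 <= s -> s <= r.+1 -> forall u v, #|Aset G s u v| <= (d - 1) ^ (s - 1).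
    exact: H.
  elim=> [//|s IHs] s1 sr u' v'.
  case: (eqVneq s 0) => [->|s0]; first exact: count1.
  have -> : s.+1 - 1 = s by tolia.
  apply: (stepc SC gr m3 F0 dimb); first by move: s0; tolia.
    by move: sr; tolia.
  move=> x; apply: IHs; move: s0 sr; tolia.
- move=> gr u v uv uvG w1 w2 H1 H2 e10 e11 e20 e21.
  have m3 : 3 <= 2 * r + 1 by move: r1; tolia.
  apply: (part2 SC gr m3 F0 r1 _ uv uvG H1 H2 e10 e11 e20 e21).
  by tolia.
Qed.
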